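(* Let $\Gamma$ be a finite connected $d$-valent graph with a GKM axial function $\alpha$, a compatible connection $\theta$, and a polarizing vector $\xi$, and suppose $\Gamma$ admits a family of Thom classes $\{\tau_p^+\}_{p\in V_\Gamma}$ as in the context. Let $e$ be an ascending edge from $p$ to $q$. If $e$ is the only ascending path from $p$ to $q$, then $\sigma_q\le\sigma_p+1$.
   Context: $\mathfrak g$ is the Lie algebra of a torus $G$, $\mathfrak S(\mathfrak g^* )$ the polynomial ring on $\mathfrak g$, graded by degree. Oriented edges $e$ have initial vertex $i(e)$, terminal vertex $t(e)$, and reverse $\bar e$; $E_p=\{e:i(e)=p\}$. An axial function $\alpha:e\mapsto\alpha_e\in\mathfrak g^*$ satisfies $\alpha_{\bar e}=-\alpha_e$ and is GKM if for each $p$ the $\alpha_e$, $e\in E_p$, are pairwise linearly independent. A compatible connection assigns to each oriented $e$ a bijection $\theta_e:E_{i(e)}\to E_{t(e)}$ with $\theta_{\bar e}=\theta_e^{-1}$, $\theta_e(e)=\bar e$, and $\alpha_{\theta_e(e')}-\alpha_{e'}\in\mathbb R\alpha_e$ for $e'\in E_{i(e)}$. $H(\Gamma,\alpha)$ is the ring of maps $h:V_\Gamma\to\mathfrak S(\mathfrak g^* )$ with $\alpha_e\mid h(i(e))-h(t(e))$ for every edge; $H^k$ consists of those with values in degree-$k$ polynomials; it is a module over $\mathfrak S(\mathfrak g^* )$. $\xi\in\mathfrak g$ is polarizing if $\alpha_e(\xi)\ne0$ for all $e$; $e$ is ascending if $\alpha_e(\xi)>0$, descending otherwise; paths are ascending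 if all edges are. $\sigma_p$ = number of descending edges in $E_p$, $E_p^-$ the set of these; $F_p$ = vertices reachable from $p$ by an ascending path (including $p$). A family of Thom classes is a family $\tau_p^+\in H^{\sigma_p}(\Gamma,\alpha)$, $p\in V_\Gamma$, freely generating $H(\Gamma,\alpha)$ as an $\mathfrak S(\mathfrak g^* )$-module, with $\tau_p^+$ vanishing outside $F_p$ and $\tau_p^+(p)=\prod_{e\in E_p^-}\alpha_e$. *)

(* Defs.v *)
(* multinomials' mpoly for the polynomial ring S(g^* ) on g = R^n,
   with R : realType (MathComp's abstract model of the real numbers). *)
From HB Require Import structures.
From mathcomp Require Import all_boot all_order all_algebra.
From mathcomp Require Import reals.
From mathcomp Require Import mpoly.

Set Implicit Arguments.
Unset Strict Implicit.
Unset Printing Implicit Defensive.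

Import Order.TTheory GRing.Theory Num.Theory.
Local Open Scope ring_scope.

Section GKM.

Variables (R : realType) (n : nat).
(* g = R^n (row vectors 'rV_n); g^* is identified with row vectors too, via
   the pairing  <a, x> = \sum_i a_i x_i. *)
Variables (V E : finType) (src tgt : E -> V) (rev : E -> E).

Definition pair_gx (a x : 'rV[R]_n) : R := \sum_(j < n) a 0 j * x 0 j.

Definition linpoly (a : 'rV[R]_n) : {mpoly R[n]} := \sum_(j < n) a 0 j *: 'X_j.

Definition is_graph : Prop :=
  (forall e, rev (rev e) = e) /\ (forall e, rev e != e) /\
  (forall e, src (rev e) = tgt e).

Definition adj : rel V := fun u v => [exists e, (src e == u) && (tgt e == v)].

Definition connected_graph : Prop := forall u v : V, connect adj u v.

Definition Eat (p : V) : {set E} := [set e | src e == p].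

Definition valent (d : nat) : Prop := forall p : V, #|Eat p| = d.

Variable alpha : E -> 'rV[R]_n.

Definition axial : Prop := forall e, alpha (rev e) = - alpha e.

Definition pairwise_lin_indep (a b : 'rV[R]_n) : Prop :=
  forall c1 c2 : R, c1 *: a + c2 *: b = 0 -> c1 = 0 /\ c2 = 0.

Definition GKM_axial : Prop :=
  axial /\
  forall p e1 e2, e1 \in Eat p -> e2 \in Eat p -> e1 != e2 ->
    pairwise_lin_indep (alpha e1) (alpha e2).

(* compatible connection: theta e is a map E_{src e} -> E_{tgt e}, written
   theta e e' for e' in E_{src e} (its values outside E_{src e} are irrelevant) *)
Definition compatible_connection (theta : E -> E -> E) : Prop :=
  (forall e e', e' \in Eat (src e) -> theta e e' \in Eat (tgt e)) /\
  (forall e e', e' \in Eat (src e) -> theta (rev e) (theta e e') = e') /\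
  (forall e, theta e e = rev e) /\
  (forall e e', e' \in Eat (src e) ->
     exists c : R, alpha (theta e e') - alpha e' = c *: alpha e).

Definition in_H (h : V -> {mpoly R[n]}) : Prop :=
  forall e, exists c : {mpoly R[n]}, h (src e) - h (tgt e) = linpoly (alpha e) * c.

Definition in_Hk (k : nat) (h : V -> {mpoly R[n]}) : Prop :=
  in_H h /\ forall v, h v \is k.-homog.

Variable xi : 'rV[R]_n.

Definition polarizing : Prop := forall e, pair_gx (alpha e) xi != 0.

Definition ascending (e : E) : bool := 0 < pair_gx (alpha e) xi.
Definition descending (e : E) : bool := ~~ ascending e.

Definition Edesc (p : V) : {set E} := [set e | (src e == p) && descending e].
Definition sigma (p : V) : nat := #|Edesc p|.

Fixpoint epath (p q : V) (s : seq E) : bool :=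
  match s with
  | [::] => p == q
  | e :: s' => (src e == p) && epath (tgt e) q s'
  end.

Definition asc_path (p q : V) (s : seq E) : bool := epath p q s && all ascending s.

(* F_p : q is reachable from p by an ascending path (the empty path gives p) *)
Definition in_F (p q : V) : Prop := exists s : seq E, asc_path p q s.

Definition thom_family (tau : V -> V -> {mpoly R[n]}) : Prop :=
  [/\
      (forall p, in_Hk (sigma p) (tau p)),
      (forall h, in_H h ->
         exists f : V -> {mpoly R[n]}, forall v, h v = \sum_(p : V) f p * tau p v),
      (forall f g : V -> {mpoly R[n]},
         (forall v, \sum_(p : V) f p * tau p v = \sum_(p : V) g p * tau p v) ->
         forall p, f p = g p),
      (forall p q, ~ in_F p q -> tau p q = 0) &
      (forall p, tau p p = \prod_(e in Edesc p) linpoly (alpha e))].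

End GKM.

(* Main.v *)
Require Import Defs.
From HB Require Import structures.
From mathcomp Require Import all_boot all_order all_algebra.
From mathcomp Require Import reals.
From mathcomp Require Import mpoly.
From mathcomp Require Import ring zify.
Import Order.TTheory GRing.Theory Num.Theory.
Local Open Scope ring_scope.
Set Implicit Arguments.
Unset Strict Implicit.

Section H.
Variables (R : realType) (n : nat).
Implicit Types (a b x y : 'rV[R]_n).

Lemma pairDl a b x : pair_gx (a + b) x = pair_gx a x + pair_gx b x.
Proof. by rewrite /pair_gx -big_split; apply: eq_bigr => j _; rewrite mxE mulrDl. Qed.
Lemma pairZl c a x : pair_gx (c *: a) x = c * pair_gx a x.
Proof. by rewrite /pair_gx mulr_sumr; apply: eq_bigr => j _; rewrite mxE mulrA. Qed.
Lemma pairDr a x y : pair_gx a (x + y) = pair_gx a x + pair_gx a y.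
Proof. by rewrite /pair_gx -big_split; apply: eq_bigr => j _; rewrite mxE mulrDr. Qed.
Lemma pairZr c a x : pair_gx a (c *: x) = c * pair_gx a x.
Proof. by rewrite /pair_gx mulr_sumr; apply: eq_bigr => j _; rewrite mxE mulrCA. Qed.
Lemma pairNl a x : pair_gx (- a) x = - pair_gx a x.
Proof. by rewrite -scaleN1r pairZl mulN1r. Qed.
Lemma pairNr a x : pair_gx a (- x) = - pair_gx a x.
Proof. by rewrite -scaleN1r pairZr mulN1r. Qed.
Lemma pairBl a b x : pair_gx (a - b) x = pair_gx a x - pair_gx b x.
Proof. by rewrite pairDl pairNl. Qed.
Lemma pairBr a x y : pair_gx a (x - y) = pair_gx a x - pair_gx a y.
Proof. by rewrite pairDr pairNr. Qed.

Definition ev x (P : {mpoly R[n]}) := P.@[fun j => x 0 j].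

Lemma ev_linpoly a x : ev x (linpoly a) = pair_gx a x.
Proof.
rewrite /ev /linpoly raddf_sum /pair_gx; apply: eq_bigr => j _.
rewrite -(mevalXU (fun j0 => x 0 j0) j). exact: mevalZ.
Qed.

Lemma avoid_seq (s : seq 'rV[R]_n) : all (fun a => a != 0) s ->
  exists v, all (fun a => pair_gx a v != 0) s.
Proof.
move=> Hs.
pose Q (a : 'rV[R]_n) : {poly R} := \sum_(j < n) a 0 j *: 'X^j.
have HQ a t : (Q a).[t] = pair_gx a (\row_(j < n) t ^+ j).
  rewrite horner_sum /pair_gx; apply: eq_bigr => j _.
  by rewrite hornerZ hornerXn mxE.
have HQ0 a : a != 0 -> Q a != 0.
  move=> Ha; apply/negP => /eqP HQa; move/negP: Ha; apply; apply/eqP.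
  apply/rowP => j; rewrite mxE.
  have := congr1 (fun P : {poly R} => P`_j) HQa.
  rewrite coef0 coef_sum (bigD1 j) //= big1 ?addr0.
    by rewrite coefZ coefXn eqxx mulr1.
  move=> i Hij; rewrite coefZ coefXn.
  by case: eqP => [/val_inj Hji|]; [rewrite Hji eqxx in Hij | rewrite mulr0].
pose P := \prod_(a <- s) Q a.
have P0 : P != 0.
  rewrite prodf_seq_neq0; apply/allP => a Ha /=; apply: HQ0.
  by move/allP: Hs; apply.
pose rs := [seq (i%:R : R) | i <- iota 0 (size P)].
have : ~~ all (root P) rs.
  apply/negP => Hall.
  have U : uniq rs.
    rewrite map_inj_uniq ?iota_uniq // => i j /eqP; rewrite eqr_nat => /eqP.
    done.
  by have := max_poly_roots P0 Hall U; rewrite size_map size_iota ltnn.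
case/allPn => t _ Ht.
exists (\row_(j < n) t ^+ j).
move: Ht; rewrite /root /P horner_prod prodf_seq_neq0 => /allP Ht.
apply/allP => a Ha; rewrite -HQ; exact: Ht.
Qed.

Lemma avoid_fin (I : finType) (P : pred I) (F : I -> 'rV[R]_n) :
  (forall i, P i -> F i != 0) -> exists v, forall i, P i -> pair_gx (F i) v != 0.
Proof.
move=> HF; have [|v Hv] := @avoid_seq [seq F i | i <- enum P].
  by rewrite all_map; apply/allP => i; rewrite mem_enum => /HF.
exists v => i Pi; move/allP: Hv; apply; apply: map_f; by rewrite mem_enum.
Qed.

Lemma mmap_horner (h : 'I_n -> {poly R}) (f : {mpoly R[n]}) t :
  (mmap (@polyC R) h f).[t] = f.@[fun j => (h j).[t]].
Proof.
rewrite /mmap mevalE horner_sum; apply: eq_bigr => m _.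
rewrite hornerCM /mmap1 horner_prod; congr (_ * _); apply: eq_bigr => i _.
by rewrite horner_exp.
Qed.

Lemma size_prod_lin (hs : 'I_n -> {poly R}) (m : 'I_n -> nat) :
  (forall i, size (hs i) <= 2)%N ->
  (size (\prod_(i < n) hs i ^+ m i)%R <= (\sum_(i < n) m i)%N.+1)%N.
Proof.
move=> Hh.
elim/big_rec2: _ => [|i s P _ IH]; first by rewrite size_poly1.
apply: leq_trans (size_polyMleq _ _) _.
have := size_poly_exp_leq (hs i) (m i).
have := Hh i.
move: (size (hs i)) (size (hs i ^+ m i)) (size P) IH => a b c IH Ha Hb.
have Hb' : (b <= (m i).+1)%N.
  have Ha1 : (a.-1 <= 1)%N by lia.
  have := leq_mul Ha1 (leqnn (m i)); rewrite mul1n => Hm.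
  lia.
lia.
Qed.

Lemma size_mmap_homog (h : 'I_n -> {poly R}) (f : {mpoly R[n]}) k :
  (forall i, size (h i) <= 2)%N -> f \is k.-homog ->
  (size (mmap (@polyC R) h f) <= k.+1)%N.
Proof.
move=> Hh Hf; rewrite /mmap big_seq.
apply: (big_ind (fun P : {poly R} => size P <= k.+1)%N).
- by rewrite size_poly0.
- move=> x y Hx Hy; apply: leq_trans (size_polyD _ _) _; by rewrite geq_max Hx Hy.
- move=> m Hm; rewrite mul_polyC; apply: leq_trans (size_scale_leq _ _) _.
  apply: leq_trans (@size_prod_lin h m Hh) _.
  by rewrite -mdegE (dhomog_mf Hf Hm).
Qed.

End H.

Lemma epath_cat (V E : finType) (src tgt : E -> V) (s t : seq E) p r q :
  epath src tgt p r s -> epath src tgt r q t -> epath src tgt p q (s ++ t).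
Proof.
elim: s p => [|x s IH] p /=; first by move=> /eqP ->.
by case/andP=> -> /IH H /H.
Qed.

Theorem theorem4p2 (R : realType) (n : nat) (V E : finType)
  (src tgt : E -> V) (rev : E -> E) (d : nat)
  (alpha : E -> 'rV[R]_n) (theta : E -> E -> E) (xi : 'rV[R]_n)
  (tau : V -> V -> {mpoly R[n]}) :
  is_graph src tgt rev ->
  connected_graph src tgt ->
  valent src d ->
  GKM_axial src rev alpha ->
  compatible_connection src tgt rev alpha theta ->
  polarizing alpha xi ->
  thom_family src tgt alpha xi tau ->
  forall (e : E) (p q : V),
    src e = p -> tgt e = q -> ascending alpha xi e ->
    (forall s : seq E, asc_path src tgt alpha xi p q s -> s = [:: e]) ->
    (sigma src alpha xi q <= (sigma src alpha xi p).+1)%N.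
Proof.
move=> Hg _ _ [Hax Hind] _ Hpol [Hk _ _ HF Hnorm] e p q Hsrc Htgt Hasc Huniq.
case: Hg => Hrr [_ Hsr].
set D := (Edesc src alpha xi q :\ rev e).
have Hdesc_neg e' : descending alpha xi e' -> pair_gx (alpha e') xi < 0.
  rewrite /descending /ascending -leNgt => H; rewrite lt_neqAle H andbT; exact: Hpol.
have Hpe : pair_gx (alpha e) xi != 0 := Hpol e.
have HeEat : e \in Eat src p by rewrite inE Hsrc.
have Hnz : forall e'', e'' \in Edesc src alpha xi p ->
    alpha e'' - (pair_gx (alpha e'') xi / pair_gx (alpha e) xi) *: alpha e != 0.
  move=> e'' He''; apply/negP => /eqP H0.
  have He''E : e'' \in Eat src p by move: He''; rewrite !inE => /andP[].
  have Hne : e'' != e.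
    apply/negP=> /eqP Heq; move: He''; rewrite inE Heq /descending Hasc.
    by rewrite andbF.
  have [H1 _] := Hind p e'' e He''E HeEat Hne 1
     (- (pair_gx (alpha e'') xi / pair_gx (alpha e) xi)) ltac:(by rewrite scale1r scaleNr).
  by have := oner_neq0 R; rewrite H1 eqxx.
have [w Hw] := @avoid_fin R n E (fun e'' => e'' \in Edesc src alpha xi p)
   (fun e'' => alpha e'' - (pair_gx (alpha e'') xi / pair_gx (alpha e) xi) *: alpha e) Hnz.
set c0 := pair_gx (alpha e) w / pair_gx (alpha e) xi.
set x0 := w - c0 *: xi.
have Hx0e : pair_gx (alpha e) x0 = 0 by rewrite pairBr pairZr /c0 divfK // subrr.
have Hx0p e'' : e'' \in Edesc src alpha xi p -> pair_gx (alpha e'') x0 != 0.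
  move=> He; have := Hw e'' He; rewrite pairBl pairZl pairBr pairZr /c0.
  suff -> : pair_gx (alpha e'') w - pair_gx (alpha e'') xi / pair_gx (alpha e) xi * pair_gx (alpha e) w
     = pair_gx (alpha e'') w - pair_gx (alpha e) w / pair_gx (alpha e) xi * pair_gx (alpha e'') xi by [].
  ring.
have [HinH Hhom] := Hk p.
have [c Hc] := HinH e; rewrite Hsrc Htgt in Hc.
have Hfx0 : ev x0 (tau p q) != 0.
  have : ev x0 (tau p p - tau p q) = 0.
    by rewrite Hc /ev mevalM -/(ev x0 _) ev_linpoly Hx0e mul0r.
  rewrite /ev mevalB => /eqP; rewrite subr_eq0 => /eqP <-.
  rewrite Hnorm (big_morph _ (mevalM _) (meval1 _)); apply/prodf_neq0 => e'' He''.
  rewrite -/(ev x0 _) ev_linpoly; exact: Hx0p.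
have HD e' : e' \in D -> exists c', tau p q = linpoly (alpha e') * c'.
  rewrite in_setD1 => /andP[Hne He'q].
  have [Hsq Hd] : src e' = q /\ descending alpha xi e'.
    by move: He'q; rewrite inE => /andP[/eqP -> ->].
  have [c' Hc'] := HinH e'.
  have Hr : tau p (tgt e') = 0.
    apply: HF => -[s /andP[Hps Has]].
    have Htr : tgt (rev e') = q by rewrite -Hsr Hrr.
    have : asc_path src tgt alpha xi p q (s ++ [:: rev e']).
      rewrite /asc_path all_cat Has /= andbT; apply/andP; split.
        by apply: epath_cat Hps _; rewrite /= Hsr Htr !eqxx.
      by rewrite /ascending Hax pairNl oppr_gt0; exact: Hdesc_neg.
    case: s Hps Has => [|x s] Hps Has /Huniq.
      by case=> Heq; move: Hne; rewrite -Heq Hrr eqxx.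
    by move/(congr1 size) => /= /eqP; rewrite size_cat addn1.
  by exists c'; rewrite -[tau p q]subr0 -Hr -Hsq Hc'.
have Ha e' : e' \in D -> pair_gx (alpha e') x0 != 0.
  move=> /HD [c' Hc']; move: Hfx0; rewrite Hc' /ev mevalM -/(ev x0 _) ev_linpoly.
  by apply: contra => /eqP ->; rewrite mul0r.
have HDq e' : e' \in D -> e' \in Eat src q.
  by rewrite in_setD1 !inE => /andP[_ /andP[]].
pose F (ij : E * E) := if ij.1 == ij.2 then alpha ij.1 else
   pair_gx (alpha ij.1) x0 *: alpha ij.2 - pair_gx (alpha ij.2) x0 *: alpha ij.1.
have HFnz : forall ij, (ij.1 \in D) && (ij.2 \in D) -> F ij != 0.
  case=> i j /= /andP[Hi Hj]; rewrite /F /=; case: (eqVneq i j) => [Heq|Hij'].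
     apply/negP => /eqP H0; move: (Hpol i).
    by rewrite /= H0 /pair_gx big1 ?eqxx // => k _; rewrite mxE mul0r.
  apply/negP => /eqP H0.
  have [_ H2] := Hind q i j (HDq i Hi) (HDq j Hj) Hij' (- pair_gx (alpha j) x0)
      (pair_gx (alpha i) x0) ltac:(by rewrite scaleNr addrC).
  by move: (Ha i Hi); rewrite H2 eqxx.
have [v Hv] := @avoid_fin R n (E * E)%type (fun ij => (ij.1 \in D) && (ij.2 \in D)) F HFnz.
have Hb e' : e' \in D -> pair_gx (alpha e') v != 0.
  by move=> H; have := Hv (e', e'); rewrite /F /= eqxx H; apply.
pose t e' := - pair_gx (alpha e') x0 / pair_gx (alpha e') v.
pose hh (j : 'I_n) : {poly R} := (x0 0 j)%:P + (v 0 j)%:P * 'X.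
pose psi := mmap (@polyC R) hh (tau p q).
have Hpsi s : psi.[s] = ev (x0 + s *: v) (tau p q).
  rewrite /psi mmap_horner /ev; apply: meval_eq => j.
  by rewrite [(x0 + _) 0 j]mxE [(s *: v) 0 j]mxE hornerD hornerMX !hornerC [s * _]mulrC.
have Hpsi0 : psi != 0.
  apply: (contraNneq _ Hfx0) => H0; have := Hpsi 0.
  by rewrite H0 horner0 scale0r addr0 => <-.
have Hsize : (size psi <= (sigma src alpha xi p).+1)%N.
  apply: size_mmap_homog; last exact: Hhom.
  move=> j; rewrite /hh; apply: leq_trans (size_polyD _ _) _.
  rewrite geq_max (leq_trans (size_polyC_leq1 _)) //=.
  apply: leq_trans (size_polyMleq _ _) _; rewrite size_polyX.
  have := size_polyC_leq1 (v 0 j); lia.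
have Hroot e' : e' \in D -> root psi (t e').
  move=> He'; have [c' Hc'] := HD e' He'.
  rewrite /root Hpsi Hc' /ev mevalM -/(ev _ _) ev_linpoly pairDr pairZr /t.
  by rewrite divfK ?Hb // addrN mul0r.
have Hinj : {in D &, injective t}.
  move=> i j Hi Hj Ht; apply/eqP; apply/negP => /negP Hij.
  have := Hv (i, j); rewrite /F /= (negbTE Hij) Hi Hj => /(_ isT).
  rewrite pairBl !pairZl.
  have -> : pair_gx (alpha i) x0 * pair_gx (alpha j) v - pair_gx (alpha j) x0 * pair_gx (alpha i) v
     = (pair_gx (alpha i) v * pair_gx (alpha j) v) * (t j - t i).
    by rewrite /t; field; rewrite ?Hb.
  by rewrite Ht subrr mulr0 eqxx.
have := @max_poly_roots _ psi (map t (enum D)) Hpsi0.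
have Hall : all (root psi) (map t (enum D)).
  by apply/allP => x /mapP [e' He' ->]; rewrite mem_enum in He'; exact: Hroot.
have Hu : uniq (map t (enum D)).
  by rewrite map_inj_in_uniq ?enum_uniq // => i j; rewrite !mem_enum; exact: Hinj.
move=> /(_ Hall Hu); rewrite size_map -cardE => Hlt.
rewrite /sigma (cardsD1 (rev e)).
have -> : rev e \in Edesc src alpha xi q.
  rewrite inE -Htgt -Hsr eqxx /= /descending /ascending Hax pairNl oppr_gt0 -leNgt.
  exact: ltW.
rewrite -/D add1n; rewrite /sigma in Hsize; exact: leq_trans Hlt Hsize.
Qed.
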